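(* Let $\mathcal{G}$ be an open directed graph with incidence operator $B=B_i\oplus B_b$. The Kirchhoff-Dirac structure $$\mathcal{D}_K(\mathcal{G})=\{(f_1,e^1,f_b,e^b)\in\Lambda_1\times\Lambda^1\times\Lambda_b\times\Lambda^b\mid B_if_1=0,\ B_bf_1=f_b,\ \exists e^{0i}\in\Lambda^{0i}:\ e^1=-B_i^*e^{0i}-B_b^*e^b\}$$ (with flow variables $(f_1,f_b)\in\Lambda_1\times\Lambda_b$ and effort variables $(e^1,e^b)\in\Lambda^1\times\Lambda^b$) is a separable Dirac structure.
   Context: A directed graph has finite vertex set $\mathcal{V}$ ($N$ vertices) and edge set $\mathcal{E}$ ($M$ edges), each edge having distinct tail and head vertices; its incidence matrix $\hat B$ is $N\times M$ with $(i,j)$ entry $1$ if edge $j$ originates at vertex $i$, $-1$ if edge $j$ points towards vertex $i$, $0$ otherwise. Fix a finite-dimensional real vector space $\mathcal{R}$. $\Lambda_0$ (resp. $\Lambda_1$) is the space of functions $\mathcal{V}\to\mathcal{R}$ (resp. $\mathcal{E}\to\mathcal{R}$), with duals $\Lambda^0,\Lambda^1$ (pairings summed over vertices/edges). The incidence operator $B:\Lambda_1\to\Lambda_0$ has matrix $\hat B\otimes I$; $B^*$ is its adjoint. An open graph has a designated set $\mathcal{V}_b$ of boundary vertices, the others $\mathcal{V}_i$ internal; this splits $\Lambda_0=\Lambda_{0i}\oplus\Lambda_{0b}$, $\Lambda^0=\Lambda^{0i}\oplus\Lambda^{0b}$ and $B=B_i\oplus B_b$. The boundary space $\Lambda_b$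 is the space of functions $\mathcal{V}_b\to\mathcal{R}$ (identified with $\Lambda_{0b}$, so $B_b:\Lambda_1\to\Lambda_b$), with dual $\Lambda^b$. A Dirac structure on a flow space $\mathcal{F}$ is a subspace $\mathcal{D}\subset\mathcal{F}\times\mathcal{F}^*$ with $\langle e\mid f\rangle=0$ for all $(f,e)\in\mathcal{D}$ and $\dim\mathcal{D}=\dim\mathcal{F}$; it is separable if $\langle e_a\mid f_b\rangle=0$ for all $(f_a,e_a),(f_b,e_b)\in\mathcal{D}$. *)

(* Defs.v *)
From HB Require Import structures.
From mathcomp Require Import all_boot all_order all_algebra.
Set Implicit Arguments. Unset Strict Implicit. Unset Printing Implicit Defensive.
Import Order.TTheory GRing.Theory Num.Theory.
Local Open Scope ring_scope.

(* Vertex set = Vi + Vb (internal + boundary vertices), edge set E,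
   edge j has tail (origin) [tl j] and head [hd j].
   The fixed finite-dimensional real vector space R is 'rV[K]_d;
   its dual is identified with 'rV[K]_d via the pairing <u|v> = u v^T. *)

Section OpenGraph.
Variables (K : realFieldType) (d : nat) (Vi Vb E : finType).
Variables (tl hd : E -> (Vi + Vb)%type).

Definition vec := 'rV[K]_d.
Definition dotv (u v : vec) : K := (u *m v^T) 0 0.

Definition Lam1 := {ffun E -> vec}.
Definition Lam0i := {ffun Vi -> vec}.
Definition Lamb := {ffun Vb -> vec}.

Definition Bhat (v : (Vi + Vb)%type) (j : E) : K :=
  if tl j == v then 1 else if hd j == v then -1 else 0.

Definition Bi (f : Lam1) : Lam0i := [ffun i => \sum_j Bhat (inl i) j *: f j].
Definition Bb (f : Lam1) : Lamb := [ffun b => \sum_j Bhat (inr b) j *: f j].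
Definition Bi_adj (e : Lam0i) : Lam1 := [ffun j => \sum_i Bhat (inl i) j *: e i].
Definition Bb_adj (e : Lamb) : Lam1 := [ffun j => \sum_b Bhat (inr b) j *: e b].

(* flow space F = Lambda_1 x Lambda_b ; effort space F^* = Lambda^1 x Lambda^b *)
Definition Flow := (Lam1 * Lamb)%type.

Definition pairing (e f : Flow) : K :=
  \sum_j dotv (e.1 j) (f.1 j) + \sum_b dotv (e.2 b) (f.2 b).

(* a Dirac structure D ⊂ F x F^* (elements (f, e)) *)
Definition dirac (D : {vspace (Flow * Flow)}) : Prop :=
  (forall x, x \in D -> pairing x.2 x.1 = 0) /\
  \dim D = \dim (fullv : {vspace Flow}).

Definition separable_dirac (D : {vspace (Flow * Flow)}) : Prop :=
  dirac D /\ forall a b, a \in D -> b \in D -> pairing a.2 b.1 = 0.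

Definition kirchhoff_dirac (x : Flow * Flow) : Prop :=
  let: ((f1, fb), (e1, eb)) := x in
  Bi f1 = 0 /\ Bb f1 = fb /\
  exists e0i : Lam0i, e1 = - Bi_adj e0i - Bb_adj eb.

End OpenGraph.

(* Main.v *)
Require Import Defs.
From HB Require Import structures.
From mathcomp Require Import all_boot all_order all_algebra zify.
Import Order.TTheory GRing.Theory Num.Theory.
Local Open Scope ring_scope.

Lemma linfunP {K : fieldType} {aT rT : vectType K} {f : aT -> rT} (hf : linear f) : linfun f =1 f.
Proof.
pose LF : {linear aT -> rT} := HB.pack f (GRing.isLinear.Build _ _ _ _ f hf).
exact: (lfunE LF).
Qed.

Section S.
Variables (K : realFieldType) (d : nat) (Vi Vb E : finType).
Variables (tl hd : E -> (Vi + Vb)%type).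

Lemma dotvE (u v : vec K d) : dotv u v = \sum_k u 0 k * v 0 k.
Proof. by rewrite /dotv mxE; apply: eq_bigr => k _; rewrite mxE. Qed.
Lemma dotvC (u v : vec K d) : dotv u v = dotv v u.
Proof. by rewrite !dotvE; apply: eq_bigr => k _; rewrite mulrC. Qed.
Lemma dotv0l (v : vec K d) : dotv 0 v = 0.
Proof. by rewrite dotvE big1 // => k _; rewrite mxE mul0r. Qed.
Lemma dotv0r (v : vec K d) : dotv v 0 = 0.
Proof. by rewrite dotvC dotv0l. Qed.
Lemma dotvDl (u w v : vec K d) : dotv (u + w) v = dotv u v + dotv w v.
Proof. by rewrite !dotvE -big_split; apply: eq_bigr => k _; rewrite mxE mulrDl. Qed.
Lemma dotvZl a (u v : vec K d) : dotv (a *: u) v = a * dotv u v.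
Proof. by rewrite !dotvE mulr_sumr; apply: eq_bigr => k _; rewrite mxE mulrA. Qed.
Lemma dotvNl (u v : vec K d) : dotv (- u) v = - dotv u v.
Proof. by rewrite -scaleN1r dotvZl mulN1r. Qed.
Lemma dotv_suml (I : finType) (u : I -> vec K d) v :
  dotv (\sum_i u i) v = \sum_i dotv (u i) v.
Proof. by elim/big_rec2: _ => [|i x y _ <-]; rewrite ?dotv0l ?dotvDl. Qed.
Lemma dotv_eq0 (u : vec K d) : dotv u u = 0 -> u = 0.
Proof.
rewrite dotvE => /psumr_eq0P H; apply/rowP => k; rewrite mxE.
have /eqP : u 0 k * u 0 k = 0.
  by apply: H => // i _; rewrite -expr2 sqr_ge0.
by rewrite mulf_eq0 orbb => /eqP.
Qed.
Lemma dotv_ge0 (u : vec K d) : 0 <= dotv u u.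
Proof. by rewrite dotvE sumr_ge0 // => k _; rewrite -expr2 sqr_ge0. Qed.

Lemma sum_dotv_eq0 (I : finType) (f : {ffun I -> vec K d}) :
  \sum_i dotv (f i) (f i) = 0 -> f = 0.
Proof.
move=> /psumr_eq0P H; apply/ffunP => i; rewrite ffunE; apply: dotv_eq0.
by apply: H => // j _; apply: dotv_ge0.
Qed.

Lemma adjI (e : Lam0i K d Vi) (f : Lam1 K d E) :
  \sum_j dotv (Bi_adj tl hd e j) (f j) = \sum_i dotv (e i) (Bi tl hd f i).
Proof.
under eq_bigr do rewrite ffunE dotv_suml.
under [RHS]eq_bigr do rewrite ffunE dotvC dotv_suml.
rewrite exchange_big; apply: eq_bigr => i _; apply: eq_bigr => j _.
by rewrite !dotvZl dotvC.
Qed.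
Lemma adjB (e : Lamb K d Vb) (f : Lam1 K d E) :
  \sum_j dotv (Bb_adj tl hd e j) (f j) = \sum_i dotv (e i) (Bb tl hd f i).
Proof.
under eq_bigr do rewrite ffunE dotv_suml.
under [RHS]eq_bigr do rewrite ffunE dotvC dotv_suml.
rewrite exchange_big; apply: eq_bigr => i _; apply: eq_bigr => j _.
by rewrite !dotvZl dotvC.
Qed.

Lemma Bi_lin : linear (@Bi K d Vi Vb E tl hd).
Proof.
move=> a u v; apply/ffunP => i; rewrite !ffunE scaler_sumr -big_split.
by apply: eq_bigr => j _; rewrite !ffunE scalerDr !scalerA mulrC.
Qed.
Lemma Bb_lin : linear (@Bb K d Vi Vb E tl hd).
Proof.
move=> a u v; apply/ffunP => i; rewrite !ffunE scaler_sumr -big_split.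
by apply: eq_bigr => j _; rewrite !ffunE scalerDr !scalerA mulrC.
Qed.
Lemma BiA_lin : linear (@Bi_adj K d Vi Vb E tl hd).
Proof.
move=> a u v; apply/ffunP => i; rewrite !ffunE scaler_sumr -big_split.
by apply: eq_bigr => j _; rewrite !ffunE scalerDr !scalerA mulrC.
Qed.
Lemma BbA_lin : linear (@Bb_adj K d Vi Vb E tl hd).
Proof.
move=> a u v; apply/ffunP => i; rewrite !ffunE scaler_sumr -big_split.
by apply: eq_bigr => j _; rewrite !ffunE scalerDr !scalerA mulrC.
Qed.

Notation L1 := (Lam1 K d E).
Notation L0 := (Lam0i K d Vi).
Notation Lb := (Lamb K d Vb).
Notation FF := (Flow K d Vb E * Flow K d Vb E)%type.

Definition BiL : 'Hom(L1, L0) := linfun (@Bi K d Vi Vb E tl hd).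
Definition BaL : 'Hom(L0, L1) := linfun (@Bi_adj K d Vi Vb E tl hd).
Definition g1 (f : L1) : FF := ((f, Bb tl hd f), (0, 0)).
Definition g2 (e : L1) : FF := ((0, 0), (e, 0)).
Definition g3 (eb : Lb) : FF := ((0, 0), (- Bb_adj tl hd eb, eb)).

Lemma z0 (V : lmodType K) (a : K) : 0 = a *: (0 : V) + 0.
Proof. by rewrite scaler0 addr0. Qed.
Lemma zN (V : lmodType K) (a : K) (x y : V) : -(a *: x + y) = a *: (- x) + (- y).
Proof. by rewrite opprD scalerN. Qed.
Lemma g1_lin : linear g1.
Proof. move=> a u v; rewrite /g1 Bb_lin; congr ((_, _), (_, _)); exact: z0. Qed.
Lemma g2_lin : linear g2.
Proof. move=> a u v; rewrite /g2; congr ((_, _), (_, _)); exact: z0. Qed.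
Lemma g3_lin : linear g3.
Proof. move=> a u v; rewrite /g3 BbA_lin; congr ((_, _), (_, _)); try exact: z0.
 exact: zN. Qed.

Definition D : {vspace FF} :=
  (linfun g1 @: lker BiL + (linfun g2 @: limg BaL + limg (linfun g3)))%VS.


Lemma zA1 (V : zmodType) (x : V) : x = x + (0 + 0).
Proof. by rewrite !addr0. Qed.
Lemma zA2 (V : zmodType) (a b : V) : a - b = 0 + (a + - b).
Proof. by rewrite add0r. Qed.
Lemma zA3 (V : zmodType) (x : V) : x = 0 + (0 + x).
Proof. by rewrite !add0r. Qed.

Lemma padd1 (U V : zmodType) (x y : U * V) : (x + y).1 = x.1 + y.1.
Proof. by []. Qed.
Lemma padd2 (U V : zmodType) (x y : U * V) : (x + y).2 = x.2 + y.2.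
Proof. by []. Qed.

Lemma g_sum f a eb : g1 f + (g2 a + g3 eb) =
  ((f, Bb tl hd f), (a - Bb_adj tl hd eb, eb)).
Proof.
rewrite /g1 /g2 /g3; congr ((_, _), (_, _)); rewrite ?padd1 ?padd2 /= ?padd1 ?padd2 /=.
all: by rewrite ?add0r ?addr0.
Qed.

Lemma BiA_N (e : L0) : Bi_adj tl hd (- e) = - Bi_adj tl hd e.
Proof.
apply/ffunP => j; rewrite !ffunE -sumrN; apply: eq_bigr => i _.
by rewrite !ffunE scalerN.
Qed.

Lemma memD (x : FF) : x \in D <-> kirchhoff_dirac tl hd x.
Proof.
split.
- move/memv_addP => [y Hy [z Hz ->]].
  move/memv_imgP: Hy => [f fk ->].
  move/memv_addP: Hz => [y2 Hy2 [z3 Hz3 ->]].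
  move/memv_imgP: Hy2 => [u /memv_imgP [e _ ->] ->]; move/memv_imgP: Hz3 => [eb _ ->].
  rewrite (linfunP g1_lin) (linfunP g2_lin) (linfunP g3_lin) /BaL (linfunP BiA_lin) g_sum /=.
  move: fk; rewrite memv_ker /BiL (linfunP Bi_lin) => /eqP ->.
  split=> //; split=> //; exists (- e); by rewrite BiA_N opprK.
- case: x => [[f1 fb] [e1 eb]] [Hi [Hb [e0 He]]].
  have -> : (f1, fb, (e1, eb)) = g1 f1 + (g2 (BaL (- e0)) + g3 eb).
    by rewrite g_sum /BaL (linfunP BiA_lin) BiA_N He Hb.
  rewrite -(linfunP g1_lin) -(linfunP g2_lin) -(linfunP g3_lin).
  apply: memv_add; first by apply: memv_img; rewrite memv_ker /BiL (linfunP Bi_lin) Hi.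
  apply: memv_add; apply: memv_img; last exact: memvf.
  exact: memv_img (memvf _).
Qed.

Lemma ffD (I : finType) (V : zmodType) (u v : {ffun I -> V}) i : (u + v) i = u i + v i.
Proof. by rewrite ffunE. Qed.
Lemma ffN (I : finType) (V : zmodType) (u : {ffun I -> V}) i : (- u) i = - u i.
Proof. by rewrite ffunE. Qed.

Lemma sepD (x y : FF) : kirchhoff_dirac tl hd x -> kirchhoff_dirac tl hd y ->
  pairing x.2 y.1 = 0.
Proof.
case: x => [[f1 fb] [e1 eb]] [_ [_ [e0 He]]].
case: y => [[f fb'] [e1' eb']] [Hi [Hb _]].
rewrite /pairing /= He -Hb.
under eq_bigr do rewrite ffD !ffN dotvDl !dotvNl.
rewrite big_split /= !sumrN adjI adjB Hi.
rewrite big1 ?oppr0 ?add0r ?addNr // => i _.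
by rewrite ffunE dotv0r.
Qed.


Lemma BiLE f : BiL f = Bi tl hd f. Proof. by rewrite /BiL (linfunP Bi_lin). Qed.
Lemma BaLE e : BaL e = Bi_adj tl hd e. Proof. by rewrite /BaL (linfunP BiA_lin). Qed.

Lemma capKI : (lker BiL :&: limg BaL = 0)%VS.
Proof.
apply/eqP; rewrite -subv0; apply/subvP => f /memv_capP [].
rewrite memv_ker BiLE => /eqP Hf /memv_imgP [e _].
rewrite BaLE => Hfe; rewrite memv0; apply/eqP; apply: sum_dotv_eq0.
rewrite {1}Hfe adjI Hf big1 // => i _.
by rewrite ffunE dotv0r.
Qed.

Lemma capKA : (lker BaL :&: limg BiL = 0)%VS.
Proof.
apply/eqP; rewrite -subv0; apply/subvP => g /memv_capP [].
rewrite memv_ker BaLE => /eqP Hg /memv_imgP [f _].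
rewrite BiLE => Hgf; rewrite memv0; apply/eqP; apply: sum_dotv_eq0.
rewrite {2}Hgf -adjI Hg big1 // => i _.
by rewrite ffunE dotv0l.
Qed.

Lemma dimKI : (\dim (lker BiL) + \dim (limg BaL) = \dim (fullv : {vspace L1}))%N.
Proof.
have h1 := limg_ker_dim BiL fullv; have h2 := limg_ker_dim BaL fullv.
rewrite !capfv in h1 h2.
have h3 := dimvS (subvf (lker BiL + limg BaL)).
have h4 := dimvS (subvf (lker BaL + limg BiL)).
rewrite dimv_disjoint_sum ?capKI // in h3.
rewrite dimv_disjoint_sum ?capKA // in h4.
rewrite !dimvf in h1 h2 h3 h4 *. lia.
Qed.


Lemma ker_g1 : lker (linfun g1) = 0%VS.
Proof.
apply/eqP/lker0P => u v; rewrite !(linfunP g1_lin) => H.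
exact: (congr1 (fun p : FF => p.1.1) H).
Qed.
Lemma ker_g2 : lker (linfun g2) = 0%VS.
Proof.
apply/eqP/lker0P => u v; rewrite !(linfunP g2_lin) => H.
exact: (congr1 (fun p : FF => p.2.1) H).
Qed.
Lemma ker_g3 : lker (linfun g3) = 0%VS.
Proof.
apply/eqP/lker0P => u v; rewrite !(linfunP g3_lin) => H.
exact: (congr1 (fun p : FF => p.2.2) H).
Qed.

Lemma cap23 : (linfun g2 @: limg BaL :&: limg (linfun g3) = 0)%VS.
Proof.
apply/eqP; rewrite -subv0; apply/subvP => x /memv_capP [].
move=> /memv_imgP [a _ ->] /memv_imgP [b _].
rewrite !(linfunP g2_lin) (linfunP g3_lin) => H.
have hb : 0 = b := congr1 (fun p : FF => p.2.2) H.
by rewrite memv0 H -hb -(linfunP g3_lin) linear0.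
Qed.

Lemma cap1_23 : (linfun g1 @: lker BiL :&: (linfun g2 @: limg BaL + limg (linfun g3)) = 0)%VS.
Proof.
apply/eqP; rewrite -subv0; apply/subvP => x /memv_capP [].
move=> /memv_imgP [f _ ->] /memv_addP [y /memv_imgP [a _ ->] [z /memv_imgP [b _ ->]]].
rewrite (linfunP g1_lin) (linfunP g2_lin) (linfunP g3_lin) => H.
have hf : f = 0 + 0 := congr1 (fun p : FF => p.1.1) H.
rewrite addr0 in hf; by rewrite memv0 hf -(linfunP g1_lin) linear0.
Qed.

Lemma dimD : \dim D = \dim (fullv : {vspace (Flow K d Vb E)}).
Proof.
rewrite /D dimv_disjoint_sum ?cap1_23 // dimv_disjoint_sum ?cap23 //.
rewrite (limg_dim_eq (f := linfun g1)) ?ker_g1 ?capv0 //.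
rewrite (limg_dim_eq (f := linfun g2)) ?ker_g2 ?capv0 //.
rewrite (limg_dim_eq (f := linfun g3)) ?ker_g3 ?capv0 //.
rewrite addnA dimKI !dimvf.
by [].
Qed.

End S.

Theorem proposition6p1 (K : realFieldType) (d : nat) (Vi Vb E : finType)
  (tl hd : E -> (Vi + Vb)%type) (Hloop : forall j, tl j != hd j) :
  exists D : {vspace (Flow K d Vb E * Flow K d Vb E)},
    (forall x, x \in D <-> kirchhoff_dirac tl hd x) /\
    separable_dirac D.
Proof.
exists (@D K d Vi Vb E tl hd); split; first exact: memD.
have sep : forall a b, a \in @D K d Vi Vb E tl hd -> b \in @D K d Vi Vb E tl hd ->
    pairing a.2 b.1 = 0.
  move=> a b Ha Hb; apply: sepD; [exact: (proj1 (@memD K d Vi Vb E tl hd a) Ha) | exact: (proj1 (@memD K d Vi Vb E tl hd b) Hb)].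
split; last exact: sep.
split; last exact: dimD.
by move=> x Hx; apply: sep.
Qed.
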